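(* Let $r_{\rm A}>0$ and $\theta_{\rm A}\in\,]0,\pi/2[$. The function $$T_D^S(\eta)=\int_{\theta_{\rm A}}^{\pi-\theta_{\rm A}}\frac{r_{\rm A}^{3/2}(1-\eta\sin\theta_{\rm A})^{3/2}}{(1-\eta\sin\theta)^2}\,{\rm d}\theta,\qquad\eta\in\,]-\infty,1[,$$ is strictly convex, with ${\rm d}^2T_D^S/{\rm d}\eta^2>0$ everywhere.
   Context: $T_D^S(\eta)$ is the elapsed time, for the Kepler problem $\ddot q=-q/|q|^3$ with center ${\rm O}$ at the origin, of the direct Keplerian arc from ${\rm A}=(r_{\rm A}\cos\theta_{\rm A},r_{\rm A}\sin\theta_{\rm A})$ to ${\rm B}=(-r_{\rm A}\cos\theta_{\rm A},r_{\rm A}\sin\theta_{\rm A})$ on the conic with polar equation $r=r_{\rm A}(1-\eta\sin\theta_{\rm A})/(1-\eta\sin\theta)$; $\eta$ is the signed eccentricity. *)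

(* Defs.v *)
From Stdlib Require Import Reals Lra ClassicalEpsilon.
Open Scope R_scope.

(* Total Riemann integral: the Riemann integral of f on [a,b] when f is
   Riemann integrable there (RiemannInt does not depend on the proof,
   cf. RiemannInt_P5), and 0 otherwise. *)
Definition RInt (f : R -> R) (a b : R) : R :=
  match excluded_middle_informative (inhabited (Riemann_integrable f a b)) with
  | left H => RiemannInt (epsilon H (fun _ => True))
  | right _ => 0
  end.

Definition TDS (rA thA eta : R) : R :=
  RInt (fun th => Rpower rA (3/2) * Rpower (1 - eta * sin thA) (3/2)
                  / (1 - eta * sin th) ^ 2) thA (PI - thA).

(* Main.v *)
Require Import Defs.
From Stdlib Require Import Reals Lra Lia ClassicalEpsilon.
From Coquelicot Require Import Coquelicot.
Open Scope R_scope.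

Definition fn (n : nat) (u v : R) := sin v ^ n / (1 - u * sin v) ^ (n + 2).
Definition G (a b : R) (n : nat) (x : R) := RInt (fun t => fn n x t) a b.

Lemma fn_deriv n u v : 1 - u * sin v <> 0 ->
  is_derive (fun u => fn n u v) u (INR (n+2) * fn (S n) u v).
Proof.
intros H. unfold fn. assert (Hq: (1 - u * sin v)^n <> 0) by (apply pow_nonzero; auto).
auto_derive. apply pow_nonzero; lra.
replace (S n + 2)%nat with (S (S (S n))) by lia.
replace (n+2)%nat with (S (S n)) by lia.
simpl pred. replace (1 + - (u * sin v)) with (1 - u * sin v) by ring. simpl. field. auto.
Qed.

Lemma RInt_scalR (f : R -> R) a b l : ex_RInt f a b -> RInt (fun x => l * f x) a b = l * RInt f a b.
Proof. intros H. exact (RInt_scal f a b l H). Qed.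

Lemma qpos y t : y < 1 -> 0 <= sin t -> 0 < 1 - y * sin t.
Proof. intros. pose proof (SIN_bound t). destruct (Rle_or_lt 0 y); nra. Qed.

Lemma cont_pow k : forall z, continuity_pt (fun x => x ^ k) z.
Proof. intros z. apply continuity_pt_filterlim. apply (@ex_derive_continuous R_AbsRing R_NormedModule). auto_derive. auto. Qed.
Lemma cont_sin : forall z, continuity_pt sin z.
Proof. intros z. apply continuity_pt_filterlim. apply (@ex_derive_continuous R_AbsRing R_NormedModule). auto_derive. auto. Qed.

Lemma fn_cont2 n x t : 1 - x * sin t <> 0 -> continuity_2d_pt (fn n) x t.
Proof.
intros H. unfold fn, Rdiv.
apply continuity_2d_pt_mult.
- apply (continuity_1d_2d_pt_comp (fun z => sin z ^ n) (fun _ v => v)).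
  + apply continuity_pt_filterlim. apply (@ex_derive_continuous R_AbsRing R_NormedModule). auto_derive. auto.
  + apply continuity_2d_pt_id2.
- apply continuity_2d_pt_inv.
  + apply (continuity_1d_2d_pt_comp (fun z => z ^ (n+2)) (fun u v => 1 - u * sin v)).
    * apply cont_pow.
    * apply continuity_2d_pt_minus. apply continuity_2d_pt_const.
      apply continuity_2d_pt_mult. apply continuity_2d_pt_id1.
      apply (continuity_1d_2d_pt_comp sin (fun _ v => v)). apply cont_sin. apply continuity_2d_pt_id2.
  + apply pow_nonzero; auto.
Qed.

Lemma fn_cont1 n y t : 1 - y * sin t <> 0 -> continuous (fun t => fn n y t) t.
Proof. intros H. apply (@ex_derive_continuous R_AbsRing R_NormedModule). unfold fn. auto_derive. apply pow_nonzero; auto. Qed.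

Lemma fn_exRInt n y a b : 0 <= a -> a <= b -> b <= PI -> y < 1 -> ex_RInt (fun t => fn n y t) a b.
Proof.
intros Ha Hab Hb Hy. apply (@ex_RInt_continuous R_CompleteNormedModule). intros z Hz.
rewrite Rmin_left in Hz by lra. rewrite Rmax_right in Hz by lra.
apply fn_cont1. assert (0 <= sin z) by (apply sin_ge_0; lra). pose proof (qpos y z Hy H). lra.
Qed.

Lemma G_deriv a b n x : 0 <= a -> a <= b -> b <= PI -> x < 1 ->
  is_derive (G a b n) x (INR (n+2) * G a b (S n) x).
Proof.
intros Ha Hab Hb Hx. unfold G.
assert (Hsin : forall t, Rmin a b <= t <= Rmax a b -> 0 <= sin t).
{ intros t Ht. rewrite Rmin_left in Ht by lra. rewrite Rmax_right in Ht by lra. apply sin_ge_0; lra. }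
assert (E : RInt (fun t => Derive (fun u => fn n u t) x) a b = INR (n+2) * RInt (fun t => fn (S n) x t) a b).
{ rewrite <- (RInt_scalR (fun t => fn (S n) x t) a b (INR (n+2))) by (apply fn_exRInt; lra).
  apply RInt_ext. intros t Ht. apply is_derive_unique. apply fn_deriv.
  assert (0 <= sin t) by (apply Hsin; lra). pose proof (qpos x t Hx H). lra. }
rewrite <- E.
apply (is_derive_RInt_param (fn n) a b x).
- apply (locally_interval _ x m_infty 1). exact I. simpl; auto.
  intros y _ Hy t Ht. simpl in Hy. eexists. apply fn_deriv.
  pose proof (qpos y t Hy (Hsin t Ht)). lra.
- intros t Ht. pose proof (qpos x t Hx (Hsin t Ht)).
  apply (continuity_2d_pt_ext_loc (fun u v => INR (n+2) * fn (S n) u v)).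
  + assert (Hl := continuity_2d_pt_neq_0 (fun u v => 1 - u * sin v) x t).
    refine (locally_2d_impl (fun u v => 1 - u * sin v <> 0) _ _ _ _ (Hl _ _)).
    * apply locally_2d_forall. intros u v Hq. symmetry. apply is_derive_unique. apply fn_deriv. auto.
    * apply continuity_2d_pt_minus. apply continuity_2d_pt_const.
      apply continuity_2d_pt_mult. apply continuity_2d_pt_id1.
      apply (continuity_1d_2d_pt_comp sin (fun _ v => v)). apply cont_sin. apply continuity_2d_pt_id2.
    * lra.
  + apply continuity_2d_pt_mult. apply continuity_2d_pt_const. apply fn_cont2. lra.
- apply (locally_interval _ x m_infty 1). exact I. simpl; auto.
  intros y _ Hy. apply fn_exRInt; auto.
Qed.

Lemma convex_of_d2 (F F1 F2 : R -> R) :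
  (forall e, e < 1 -> derivable_pt_lim F e (F1 e) /\ derivable_pt_lim F1 e (F2 e) /\ 0 < F2 e) ->
  forall x y t, x < 1 -> y < 1 -> x <> y -> 0 < t < 1 ->
  F (t * x + (1 - t) * y) < t * F x + (1 - t) * F y.
Proof.
  intros H.
  assert (Hinc : forall u v, u < v -> v < 1 -> F1 u < F1 v).
  { intros u v Huv Hv. destruct (MVT_cor2 F1 F2 u v Huv) as [c [Hc1 Hc2]].
    - intros c Hc. apply (H c). lra.
    - assert (0 < F2 c) by (apply H; lra). nra. }
  assert (Hmain : forall x y t, x < y -> y < 1 -> 0 < t < 1 ->
     F (t * x + (1 - t) * y) < t * F x + (1 - t) * F y).
  { intros x y t Hxy Hy Ht. set (z := t * x + (1 - t) * y).
    assert (Hxz : x < z) by (unfold z; nra). assert (Hzy : z < y) by (unfold z; nra).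
    destruct (MVT_cor2 F F1 x z Hxz) as [c1 [E1 C1]].
    { intros c Hc. apply H; lra. }
    destruct (MVT_cor2 F F1 z y Hzy) as [c2 [E2 C2]].
    { intros c Hc. apply H; lra. }
    assert (F1 c1 < F1 c2) by (apply Hinc; lra).
    assert (Ez1 : z - x = (1 - t) * (y - x)) by (unfold z; ring).
    assert (Ez2 : y - z = t * (y - x)) by (unfold z; ring).
    rewrite Ez1 in E1. rewrite Ez2 in E2.
    assert (0 < t * (1 - t) * (y - x)) by (apply Rmult_lt_0_compat; nra).
    replace (t * F x + (1 - t) * F y) with (F z + (1 - t) * (F y - F z) - t * (F z - F x)) by ring.
    rewrite E1, E2. nra. }
  intros x y t Hx Hy Hxy Ht. destruct (Rlt_or_le x y) as [Hl|Hl].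
  - apply Hmain; lra.
  - replace (t * x + (1 - t) * y) with ((1 - t) * y + (1 - (1 - t)) * x) by ring.
    replace (t * F x + (1 - t) * F y) with ((1 - t) * F y + (1 - (1 - t)) * F x) by ring.
    apply Hmain; lra.
Qed.

Lemma dmul f g x df dg : is_derive f x df -> is_derive g x dg ->
  is_derive (fun t => f t * g t) x (df * g x + f x * dg).
Proof. intros. apply is_derive_Reals. apply (derivable_pt_lim_mult f g); apply is_derive_Reals; auto. Qed.
Lemma dplus f g x df dg : is_derive f x df -> is_derive g x dg ->
  is_derive (fun t => f t + g t) x (df + dg).
Proof. intros. apply is_derive_Reals. apply (derivable_pt_lim_plus f g); apply is_derive_Reals; auto. Qed.
Lemma dscal (K : R) f x df : is_derive f x df -> is_derive (fun t => K * f t) x (K * df).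
Proof. intros. apply is_derive_Reals. apply (derivable_pt_lim_scal f); apply is_derive_Reals; auto. Qed.

Lemma req (x y : R) : x = y -> x = y.
Proof. auto. Qed.

Lemma deq (f : R -> R) x l l' : is_derive f x l -> l = l' -> is_derive f x l'.
Proof. intros H E. rewrite <- E. exact H. Qed.

Lemma Rp_deriv s y e : 0 < 1 - e * s ->
  is_derive (fun e => Rpower (1 - e * s) y) e (y * Rpower (1 - e * s) (y - 1) * (- s)).
Proof.
intros H. apply is_derive_Reals.
apply (derivable_pt_lim_comp (fun e => 1 - e * s) (fun x => Rpower x y)).
- apply is_derive_Reals. auto_derive. auto. ring.
- apply derivable_pt_lim_power. auto.
Qed.

Lemma exR_plus (f g : R -> R) a b : ex_RInt f a b -> ex_RInt g a b -> ex_RInt (fun x => f x + g x) a b.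
Proof. intros. exact (ex_RInt_plus f g a b H H0). Qed.
Lemma exR_scal (f : R -> R) a b k : ex_RInt f a b -> ex_RInt (fun x => k * f x) a b.
Proof. intros. exact (ex_RInt_scal f a b k H). Qed.
Lemma RInt_plusR (f g : R -> R) a b : ex_RInt f a b -> ex_RInt g a b ->
  RInt (fun x => f x + g x) a b = RInt f a b + RInt g a b.
Proof. intros. exact (RInt_plus f g a b H H0). Qed.

Lemma RInt_lin3 (f g h : R -> R) a b c1 c2 c3 :
  ex_RInt f a b -> ex_RInt g a b -> ex_RInt h a b ->
  RInt (fun t => c1 * f t + c2 * g t + c3 * h t) a b = c1 * RInt f a b + c2 * RInt g a b + c3 * RInt h a b.
Proof.
intros Hf Hg Hh.
rewrite (RInt_plusR (fun t => c1 * f t + c2 * g t) (fun t => c3 * h t)).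
rewrite (RInt_plusR (fun t => c1 * f t) (fun t => c2 * g t)).
rewrite (RInt_scalR f a b c1 Hf), (RInt_scalR g a b c2 Hg), (RInt_scalR h a b c3 Hh). reflexivity.
apply (exR_scal f a b c1 Hf). apply (exR_scal g a b c2 Hg).
apply (exR_plus (fun t => c1 * f t) (fun t => c2 * g t) a b (exR_scal f a b c1 Hf) (exR_scal g a b c2 Hg)).
apply (exR_scal h a b c3 Hh).
Qed.

Lemma TDS_eq rA thA eta : 0 < thA < PI / 2 -> eta < 1 ->
  TDS rA thA eta = Rpower rA (3/2) * Rpower (1 - eta * sin thA) (3/2) * G thA (PI - thA) 0 eta.
Proof.
intros Hth He.
assert (Hsin : forall t, Rmin thA (PI - thA) < t < Rmax thA (PI - thA) -> 0 < 1 - eta * sin t).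
{ intros t Ht. rewrite Rmin_left in Ht by lra. rewrite Rmax_right in Ht by lra.
  apply qpos; auto. apply sin_ge_0; lra. }
assert (Hext : forall t, Rmin thA (PI - thA) < t < Rmax thA (PI - thA) ->
  (Rpower rA (3/2) * Rpower (1 - eta * sin thA) (3/2)) * fn 0 eta t =
  Rpower rA (3 / 2) * Rpower (1 - eta * sin thA) (3 / 2) / (1 - eta * sin t) ^ 2).
{ intros t Ht. pose proof (Hsin t Ht). unfold fn. simpl. field. lra. }
assert (Hex : ex_RInt (fun t => fn 0 eta t) thA (PI - thA)) by (apply fn_exRInt; lra).
unfold TDS, Defs.RInt, G.
destruct (excluded_middle_informative _) as [H|H].
- rewrite <- RInt_Reals. rewrite <- RInt_scalR by auto. symmetry. apply RInt_ext. exact Hext.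
- exfalso. apply H. constructor. apply ex_RInt_Reals_0.
  apply (ex_RInt_ext (fun t => (Rpower rA (3/2) * Rpower (1 - eta * sin thA) (3/2)) * fn 0 eta t)).
  exact Hext. apply exR_scal. auto.
Qed.

Lemma sin_geA thA t : 0 < thA < PI / 2 -> thA <= t <= PI - thA -> sin thA <= sin t.
Proof.
intros H Ht. pose proof PI2_RGT_0. destruct (Rle_or_lt t (PI/2)).
- apply sin_incr_1; lra.
- rewrite <- (sin_PI_x t). apply sin_incr_1; lra.
Qed.

Lemma comb c s r x0 x1 x2 : c*x0 + -6*s*r*x1 + 6*(r*r*r)*x2 =
  c*x0 + -(3/2)*s*r*(2*x1) + (-(3/2)*s*r*(2*x1) + r*r*r*(2*(3*x2))).
Proof. field. Qed.

Lemma alg s u q r c1 c2 c3 : 0 < s -> s <= u -> 0 < r -> 0 < q -> r*r*u - s*q = u - s ->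
  c1 = 3/4*s^2/r -> c2 = -6*s*r -> c3 = 6*(r*r*r) ->
  0 < c1 * (u^0/q^(0+2)) + c2*(u^1/q^(1+2)) + c3*(u^2/q^(2+2)).
Proof.
intros Hs Hsu Hr Hq E -> -> ->.
assert (HB : 0 < r*r*u) by (assert (0 < r*r) by nra; nra).
assert (HA : 0 < s*q) by nra.
assert (Hp : 0 < 3/4*(s*q)^2 - 6*(s*q)*(r*r*u) + 6*(r*r*u)^2).
{ assert (0 <= 6*(r*r*u)*(r*r*u - s*q)) by (apply Rmult_le_pos; nra). nra. }
replace (3/4*s^2/r * (u^0/q^(0+2)) + -6*s*r*(u^1/q^(1+2)) + 6*(r*r*r)*(u^2/q^(2+2)))
  with ((3/4*(s*q)^2 - 6*(s*q)*(r*r*u) + 6*(r*r*u)^2) / (r * q^4)).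
- apply Rdiv_lt_0_compat; auto. apply Rmult_lt_0_compat; auto. apply pow_lt; auto.
- simpl. field. split; lra.
Qed.

Theorem proposition5 (rA thA : R) (hr : 0 < rA) (h1 : 0 < thA) (h2 : thA < PI / 2) :
  (forall x y t : R, x < 1 -> y < 1 -> x <> y -> 0 < t < 1 ->
     TDS rA thA (t * x + (1 - t) * y) < t * TDS rA thA x + (1 - t) * TDS rA thA y)
  /\
  (exists T1 T2 : R -> R, forall eta : R, eta < 1 ->
     derivable_pt_lim (TDS rA thA) eta (T1 eta) /\
     derivable_pt_lim T1 eta (T2 eta) /\
     0 < T2 eta).
Proof.
set (a := thA). set (b := PI - thA). set (s := sin thA).
set (K := Rpower rA (3/2)).
set (P := fun e => Rpower (1 - e * s) (3/2)).
set (P1 := fun e => 3/2 * Rpower (1 - e * s) (3/2 - 1) * (- s)).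
set (P2 := fun e => 3/2 * ((3/2 - 1) * Rpower (1 - e * s) (3/2 - 1 - 1) * (- s)) * (- s)).
assert (Hs : 0 < s) by (apply sin_gt_0; lra).
assert (Hs1 : s <= 1) by (unfold s; pose proof (SIN_bound thA); lra).
assert (Hw : forall e, e < 1 -> 0 < 1 - e * s) by (intros e He; destruct (Rle_or_lt 0 e); [assert (0 <= e * (1 - s)) by (apply Rmult_le_pos; lra)|assert (e * s < 0) by (apply Rmult_neg_pos; lra)]; nra).
assert (HG : forall n e, e < 1 -> is_derive (G a b n) e (INR (n+2) * G a b (S n) e)).
{ intros. apply G_deriv; unfold a, b; lra. }
assert (HP1 : forall e, e < 1 -> is_derive P1 e (P2 e)).
{ intros e He. unfold P1, P2.
  apply (@is_derive_ext R_AbsRing R_NormedModule (fun e => (3/2 * - s) * Rpower (1 - e * s) (3/2 - 1))).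
  { intros t. assert (forall t0 : R, 3 / 2 * - s * Rpower (1 - t0 * s) (3 / 2 - 1) = 3 / 2 * Rpower (1 - t0 * s) (3 / 2 - 1) * - s) by (intros; ring). apply H. }
  apply (deq _ _ (3/2 * -s * ((3/2 - 1) * Rpower (1 - e * s) (3/2 - 1 - 1) * - s))).
  apply dscal. apply Rp_deriv; auto. apply req. ring. }
set (T1 := fun e => K * (P1 e * G a b 0 e + P e * (INR (0+2) * G a b 1 e))).
set (T2 := fun e => K * ((P2 e * G a b 0 e + P1 e * (INR (0+2) * G a b 1 e))
        + (P1 e * (INR (0+2) * G a b 1 e) + P e * (INR (0+2) * (INR (1+2) * G a b 2 e))))).
assert (Hmain : forall eta, eta < 1 -> derivable_pt_lim (TDS rA thA) eta (T1 eta) /\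
     derivable_pt_lim T1 eta (T2 eta) /\ 0 < T2 eta).
{ intros eta He. split; [|split].
  - apply is_derive_Reals.
    apply (is_derive_ext_loc (fun e => K * (P e * G a b 0 e))).
    + apply (locally_interval _ eta m_infty 1). exact I. simpl; auto.
      intros y _ Hy. simpl in Hy. symmetry. unfold K, P, a, b. rewrite TDS_eq by (auto; lra). unfold s. rewrite Rmult_assoc. reflexivity.
    + unfold T1. apply dscal. apply dmul. apply Rp_deriv. auto. apply HG; auto.
  - apply is_derive_Reals. unfold T1, T2. apply dscal. apply dplus.
    + apply (dmul P1 (G a b 0)). apply HP1; auto. apply HG; auto.
    + apply (dmul P (fun t => INR (0+2) * G a b 1 t)). apply Rp_deriv. auto. apply dscal. apply HG; auto.
  - assert (Hw0 := Hw eta He). set (w := 1 - eta * s) in *.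
    set (r := Rpower w (1/2)).
    assert (Hr : 0 < r) by (unfold r, Rpower; apply exp_pos).
    assert (Hrr : r * r = w) by (unfold r; rewrite <- Rpower_plus; replace (1/2+1/2) with 1 by field; apply Rpower_1; auto).
    assert (EP : P eta = w * r).
    { unfold P; fold w. replace (3/2) with (1 + 1/2) by field. rewrite Rpower_plus, Rpower_1; auto. }
    assert (EP1 : P1 eta = -(3/2) * s * r).
    { unfold P1; fold w. replace (3/2 - 1) with (1/2) by field. fold r. ring. }
    assert (EP2 : P2 eta = 3/4 * s^2 / r).
    { unfold P2; fold w. replace (3/2 - 1 - 1) with (-(1/2)) by field. rewrite Rpower_Ropp. fold r. field. lra. }
    assert (HK : 0 < K) by (unfold K, Rpower; apply exp_pos).
    assert (Hab : a < b) by (unfold a, b; lra).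
    assert (Hex : forall n, ex_RInt (fun t => fn n eta t) a b) by (intros; apply fn_exRInt; unfold a, b; lra).
    unfold T2. rewrite EP, EP1, EP2.
    replace (INR (0+2)) with 2 by (simpl; ring). replace (INR (1+2)) with 3 by (simpl; ring).
    apply Rmult_lt_0_compat; auto.
    unfold G.
    match goal with |- 0 < ?X => replace X with (3/4*s^2/r * RInt (fun t => fn 0 eta t) a b + -6*s*r*RInt (fun t => fn 1 eta t) a b + 6*(r*r*r)*RInt (fun t => fn 2 eta t) a b) by (rewrite <- Hrr; apply comb) end.
    rewrite <- (RInt_lin3 _ _ _ a b (3/4*s^2/r) (-6*s*r) (6*(r*r*r))) by auto.
    apply RInt_gt_0; auto.
    + intros t Ht. pose proof (sin_geA thA t (conj h1 h2)) as Hst.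
      fold s in Hst. assert (Hu : s <= sin t) by (apply Hst; unfold a, b in Ht; lra).
      assert (Hq : 0 < 1 - eta * sin t) by (apply qpos; auto; apply sin_ge_0; unfold a, b in Ht; lra).
      unfold fn. apply (alg s (sin t) (1 - eta * sin t) r); auto.
      rewrite Hrr. unfold w. ring.
    + intros t Ht. assert (Hq : 0 < 1 - eta * sin t) by (apply qpos; auto; apply sin_ge_0; unfold a, b in Ht; lra).
      apply (@ex_derive_continuous R_AbsRing R_NormedModule). unfold fn. auto_derive.
      repeat split; repeat apply Rmult_integral_contrapositive_currified; try apply pow_nonzero; lra. }
split.
- apply (convex_of_d2 _ T1 T2 Hmain).
- exists T1, T2. exact Hmain.
Qed.
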